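(* Let $k\ge3$ be an integer and let $a>0$ and $\alpha>0$ be real numbers. W.h.p. over the choice of $\Phi=\Phi(k,n,\lfloor\alpha n\rfloor)$, for every set of clauses $Y$ with $|Y|\ge a\log n$, we have $|\mathrm{var}(Y)|\ge a\log n$.
   Context: The random $k$-CNF formula $\Phi(k,n,m)$ is uniform over $k$-CNF formulas with $n$ variables and $m$ clauses of $k$ literals each (repetitions allowed); w.h.p. means with probability $1-o(1)$ as $n\to\infty$. For a set of clauses $Y$, $\mathrm{var}(Y)$ is the set of variables appearing in some clause of $Y$. *)

(* Defs.v *)
From HB Require Import structures.
From mathcomp Require Import all_boot all_order all_algebra.
From mathcomp Require Import all_classical all_reals all_analysis.
Set Implicit Arguments. Unset Strict Implicit. Unset Printing Implicit Defensive.
Import Order.TTheory GRing.Theory Num.Theory.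
Local Open Scope ring_scope.

(* A literal over variables 'I_n: (variable, sign); true = positive. *)
Definition literal (n : nat) := ('I_n * bool)%type.
(* A k-clause: an ordered k-tuple of literals (repetitions allowed). *)
Definition clause (n k : nat) := {ffun 'I_k -> literal n}.
Definition formula (n k m : nat) := {ffun 'I_m -> clause n k}.

Definition var_of (n k m : nat) (Phi : formula n k m) (Y : {set 'I_m}) : {set 'I_n} :=
  [set x | [exists i in Y, exists j : 'I_k, (Phi i j).1 == x]].

Definition good_event (R : realType) (a : R) (n k m : nat) (Phi : formula n k m) : bool :=
  [forall Y : {set 'I_m},
     (a * ln (n%:R : R) <= (#|Y|%:R : R)) ==> (a * ln (n%:R : R) <= (#|var_of Phi Y|%:R : R))].

Definition prob_good (R : realType) (a : R) (n k m : nat) : R :=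
  (#|[set Phi : formula n k m | good_event a Phi]|%:R : R) / (#|{: formula n k m}|%:R : R).

(* Main.v *)
Require Import Defs.
From HB Require Import structures.
From mathcomp Require Import all_boot all_order all_algebra.
From mathcomp Require Import all_classical all_reals all_analysis.
From mathcomp Require Import unstable.
From mathcomp Require Import ring lra zify.
Import Order.TTheory GRing.Theory Num.Theory numFieldNormedType.Exports.
Lemma foldr_prod (T : finType) (g : T -> nat) :
  foldr muln 1%N [seq g x | x : T] = (\prod_(x : T) g x)%N.
Proof. by rewrite foldrE big_image. Qed.

Lemma card_clause_in n k (V : {set 'I_n}) :
  #|[pred c : clause n k | [forall j, (c j).1 \in V]]| = ((#|V| * 2) ^ k)%N.
Proof.
have -> : #|[pred c : clause n k | [forall j, (c j).1 \in V]]| =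
   #|@ffun_on 'I_k [pred l : literal n | l.1 \in V]|.
  apply: eq_card => c; apply/idP/idP.
  - rewrite inE => /forallP H; apply/forallP => j; exact: H.
  - move/forallP => H; rewrite inE; apply/forallP => j; have := H j; by rewrite /= inE.
rewrite card_ffun_on card_ord.
have -> : #|[pred l : literal n | l.1 \in V]| = (#|V| * 2)%N.
  rewrite -card_bool -cardsT -cardsX; apply: eq_card => -[x b]; by rewrite !inE andbT.
by [].
Qed.

Lemma card_S n k m (Y : {set 'I_m}) (V : {set 'I_n}) :
  #|[set Phi : formula n k m | var_of Phi Y \subset V]| =
  (((#|V| * 2) ^ k) ^ #|Y| * ((n * 2) ^ k) ^ (m - #|Y|))%N.
Proof.
pose F := fun i : 'I_m => if i \in Y then [pred c : clause n k | [forall j, (c j).1 \in V]]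
                          else [pred c : clause n k | true].
have -> : #|[set Phi : formula n k m | var_of Phi Y \subset V]| =
   #|(family F : simpl_pred (formula n k m))|.
  apply: eq_card => Phi; apply/idP/idP.
  - rewrite inE => /fintype.subsetP H; apply/forallP => i; change (Phi i \in F i); rewrite /F; case: ifP => iY; rewrite inE //; apply/forallP => j.
    apply: H; rewrite inE; apply/existsP; exists i; rewrite iY /=; apply/existsP; by exists j.
  - move/forallP => H; rewrite inE; apply/fintype.subsetP => x; rewrite inE => /existsP[i /andP[iY /existsP[j /eqP <-]]].
    have : Phi i \in F i := H i. rewrite /F iY inE => /forallP; exact.
rewrite card_family foldr_prod (bigID (mem Y)) /=.
rewrite (eq_bigr (fun _ => ((#|V| * 2) ^ k)%N)); last first.
  by move=> i iY; rewrite /F iY card_clause_in.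
rewrite [X in (_ * X)%N](eq_bigr (fun _ => ((n * 2) ^ k)%N)); last first.
  move=> i iY; rewrite /F (negbTE iY).
  have -> : #|[pred c : clause n k | true]| = #|{: clause n k}| by apply: eq_card.
  by rewrite card_ffun card_prod card_bool !card_ord.
rewrite !prod_nat_const; congr (_ * _)%N; congr (_ ^ _)%N.
have := cardC (mem Y); rewrite card_ord => E.
have -> : #|(fun i : 'I_m => i \notin Y)| = #|[predC Y]| by apply: eq_card.
by move: E => /(congr1 (fun z => z - #|Y|)%N); rewrite addKn.
Qed.

Lemma bin_le_exp n c : ('C(n, c) <= n ^ c)%N.
Proof.
apply: (@leq_trans ('C(n, c) * c`!)); first by rewrite leq_pmulr ?fact_gt0.
rewrite bin_ffact ffact_prod.
apply: (@leq_trans (\prod_(i < c) n)); first by apply: leq_prod => i _; rewrite leq_subr.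
by rewrite prod_nat_const card_ord.
Qed.

Lemma exists_subset_card (T : finType) (A : {set T}) c :
  (c <= #|A|)%N -> exists2 B : {set T}, B \subset A & #|B| = c.
Proof.
elim: c => [|c IH] H.
  exists (finset.set0 : {set T}); [exact: finset.sub0set | exact: cards0].
have [B BA cB] := IH (ltnW H).
have : (0 < #|A :\: B|)%N by rewrite cardsDS // cB subn_gt0.
case/card_gt0P => x; rewrite inE => /andP[xB xA].
exists (x |: B); first by rewrite finset.subUset finset.sub1set xA BA.
by rewrite cardsU1 xB cB.
Qed.

Lemma var_of_sub n k m (Phi : formula n k m) (Y1 Y2 : {set 'I_m}) :
  Y1 \subset Y2 -> var_of Phi Y1 \subset var_of Phi Y2.
Proof.
move=> /fintype.subsetP H; apply/fintype.subsetP => x; rewrite !inE.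
case/existsP => i /andP[iY Hj]; apply/existsP; exists i; by rewrite H.
Qed.

Lemma card_small_sets n t : (0 < n)%N ->
  (#|[set V : {set 'I_n} | (#|V| < t)%N]| <= t * n ^ t)%N.
Proof.
move=> n0.
have -> : [set V : {set 'I_n} | (#|V| < t)%N] =
   \bigcup_(c < t) [set V : {set 'I_n} | #|V| == c].
  apply/setP => V; rewrite inE; apply/idP/bigcupP.
  - move=> Vt; exists (Ordinal Vt) => //; by rewrite inE.
  - by case=> c _; rewrite inE => /eqP ->.
apply: (leq_trans (card_big_setU _ _ _)).
apply: (@leq_trans (\sum_(c < t) n ^ t)%N); last by rewrite sum_nat_const card_ord.
apply: leq_sum => c _.
rewrite card_draws card_ord.
apply: (leq_trans (bin_le_exp n c)); apply: leq_pexp2l => //; exact: ltnW.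
Qed.

Local Open Scope ring_scope.

Lemma card_formula n k m : #|{: formula n k m}| = (((n * 2) ^ k) ^ m)%N.
Proof. by rewrite card_ffun card_ffun card_prod card_bool !card_ord. Qed.

Lemma expn_mono a b e : (a <= b)%N -> (a ^ e <= b ^ e)%N.
Proof. by move=> ab; elim: e => // e IH; rewrite !expnS leq_mul. Qed.

Lemma S_nat n k m (Y : {set 'I_m}) (V : {set 'I_n}) B : (#|V| <= B)%N ->
  (#|[set Phi : formula n k m | var_of Phi Y \subset V]| * n ^ (k * #|Y|) <=
   #|{: formula n k m}| * B ^ (k * #|Y|))%N.
Proof.
move=> VB; rewrite card_S card_formula.
have tm : (#|Y| <= m)%N by have := max_card (mem Y); rewrite card_ord.
have -> : (((n*2)^k)^m = ((n*2)^k)^#|Y| * ((n*2)^k)^(m - #|Y|))%N by rewrite -expnD subnKC.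
rewrite -!expnM.
set e := (k * #|Y|)%N; set X := ((n * 2) ^ (k * (m - #|Y|)))%N.
rewrite !expnMn.
have -> : (#|V| ^ e * 2 ^ e * X * n ^ e = #|V| ^ e * (2 ^ e * X * n ^ e))%N by ring.
have -> : (n ^ e * 2 ^ e * X * B ^ e = B ^ e * (2 ^ e * X * n ^ e))%N by ring.
by rewrite leq_mul2r expn_mono ?orbT.
Qed.

Lemma S_real (R : realType) n k m (Y : {set 'I_m}) (V : {set 'I_n}) B : (0 < n)%N -> (#|V| <= B)%N ->
  (#|[set Phi : formula n k m | var_of Phi Y \subset V]|%:R / #|{: formula n k m}|%:R : R) <=
   (B%:R / n%:R) ^+ (k * #|Y|).
Proof.
move=> n0 VB.
have A0 : (0 < #|{: formula n k m}|)%N by rewrite card_formula !expn_gt0 muln_gt0 n0.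
rewrite expr_div_n ler_pdivrMr ?ltr0n // mulrAC ler_pdivlMr ?exprn_gt0 ?ltr0n //.
rewrite -!natrX -!natrM ler_nat; rewrite [X in (_ <= X)%N]mulnC; exact: S_nat.
Qed.

Lemma key (R : realType) n k m B (x : R) (P : pred (formula n k m)) :
 (0 < n)%N -> (m * n * B ^ k)%:R / (n ^ k)%:R <= x -> x <= 1 ->
 (forall Phi, P Phi -> exists Y : {set 'I_m},
     [&& 0 < #|Y|, #|Y| <= B & #|var_of Phi Y| < #|Y|]%N) ->
 #|[set Phi | P Phi]|%:R / #|{: formula n k m}|%:R <= (B.+1 * B)%:R * x.
Proof.
move=> n0 hx x1 HP.
have A0 : (0 < #|{: formula n k m}|)%N by rewrite card_formula !expn_gt0 muln_gt0 n0.
set QY := fun Y : {set 'I_m} => (0 < #|Y| <= B)%N.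
have Hsub : [set Phi | P Phi] \subset \bigcup_(Y | QY Y)
    \bigcup_(V : {set 'I_n} | (#|V| < #|Y|)%N) [set Phi : formula n k m | var_of Phi Y \subset V].
  apply/fintype.subsetP => Phi; rewrite inE => /HP [Y /and3P[Y0 YB HV]].
  apply/bigcupP; exists Y; first by rewrite /QY Y0 YB.
  apply/bigcupP; exists (var_of Phi Y) => //; by rewrite inE.
have Hnat : (#|[set Phi | P Phi]| <= \sum_(Y | QY Y) \sum_(V : {set 'I_n} | (#|V| < #|Y|)%N)
     #|[set Phi : formula n k m | var_of Phi Y \subset V]|)%N.
  apply: (leq_trans (subset_leq_card Hsub)).
  apply: (leq_trans (card_big_setU _ _ _)); apply: leq_sum => Y _; exact: card_big_setU.
set g := fun t : nat => (B * n ^ t)%:R * ((B%:R / n%:R) ^+ (k * t)) : R.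
have g0 : forall t, 0 <= g t.
  by move=> t; rewrite /g mulr_ge0 ?exprn_ge0 ?divr_ge0 ?ler0n.
have H1 : #|[set Phi | P Phi]|%:R / #|{: formula n k m}|%:R <= \sum_(Y | QY Y) g #|Y|.
  apply: (le_trans (y := (\sum_(Y | QY Y) \sum_(V : {set 'I_n} | (#|V| < #|Y|)%N)
     (#|[set Phi : formula n k m | var_of Phi Y \subset V]|%:R : R)) / #|{: formula n k m}|%:R)).
    rewrite ler_pM2r ?invr_gt0 ?ltr0n //; move: Hnat; rewrite -(ler_nat R) => /le_trans; apply.
    by rewrite natr_sum; apply: ler_sum => Y _; rewrite natr_sum.
  rewrite mulr_suml; apply: ler_sum => Y /andP[Y0 YB].
  rewrite mulr_suml.
  apply: (le_trans (y := \sum_(V : {set 'I_n} | (#|V| < #|Y|)%N) (B%:R / n%:R) ^+ (k * #|Y|))).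
    apply: ler_sum => V VY; apply: S_real => //; exact: leq_trans (ltnW VY) YB.
  rewrite sumr_const /g -(mulr_natl ((B%:R / n%:R) ^+ (k * #|Y|))); apply: ler_wpM2r; first by rewrite exprn_ge0 ?divr_ge0 ?ler0n.
  rewrite ler_nat.
  apply: (@leq_trans #|[set V : {set 'I_n} | (#|V| < #|Y|)%N]|).
    by apply: eq_leq; apply: eq_card => V; rewrite inE.
  apply: leq_trans (@card_small_sets n #|Y| n0) _; by rewrite leq_mul2r YB orbT.
have H2 : \sum_(Y | QY Y) g #|Y| <= \sum_(j < B.+1 | (0 < j)%N) (m ^ j)%:R * g j.
  rewrite (partition_big (fun Y : {set 'I_m} => (inord #|Y| : 'I_B.+1))
                         (fun j : 'I_B.+1 => (0 < j)%N)) /=; last first.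
    by move=> Y /andP[Y0 YB]; rewrite inordK.
  apply: ler_sum => j j0.
  rewrite (eq_bigr (fun _ => g j)); last first.
    by move=> Y /andP[/andP[_ YB] /eqP <-]; rewrite inordK.
  rewrite sumr_const -(mulr_natl (g j)); apply: ler_wpM2r => //.
  rewrite ler_nat; apply: (leq_trans _ (bin_le_exp m j)).
  have := card_draws 'I_m j; rewrite card_ord => <-.
  apply: subset_leq_card; apply/fintype.subsetP => Y; rewrite !inE.
  by case/andP => /andP[_ YB] /eqP <-; rewrite inordK.
set y := (m * n * B ^ k)%:R / (n ^ k)%:R : R.
have y0 : 0 <= y by rewrite /y divr_ge0 ?ler0n.
have x0 : 0 <= x by apply: le_trans hx.
have H3 : forall j, (0 < j)%N -> (m ^ j)%:R * g j <= B%:R * x.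
  move=> j j0; rewrite /g.
  have -> : (m ^ j)%:R * ((B * n ^ j)%:R * (B%:R / n%:R) ^+ (k * j)) = B%:R * y ^+ j :> R.
    rewrite /y exprM !natrM !natrX expr_div_n !exprMn; ring.
  apply: ler_wpM2l; first by rewrite ler0n.
  apply: (le_trans _ hx); apply: ler_iXnr => //; exact: le_trans hx x1.
apply: (le_trans H1); apply: (le_trans H2).
apply: (le_trans (y := \sum_(j < B.+1 | (0 < j)%N) (B%:R * x))).
  by apply: ler_sum => j j0; apply: H3.
rewrite sumr_const -(mulr_natl (B%:R * x)) natrM mulrA; apply: ler_wpM2r => //; apply: ler_wpM2r; first by rewrite ler0n.
rewrite ler_nat; have := max_card (mem (fun i : 'I_B.+1 => eqn (1 - i) 0)); by rewrite card_ord.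
Qed.

Lemma anal (R : realType) (a alpha e : R) k (n : nat) :
  0 < a -> 0 < alpha -> 0 < e -> (0 < n)%N ->
  1 <= ln (n%:R : R) ->
  alpha * (a + 2) ^+ k.+2 * (k.+3)`!%:R / e <= ln (n%:R : R) ->
  ((Num.truncn (a * ln (n%:R : R))).+2 * (Num.truncn (a * ln (n%:R : R))).+1)%:R *
     (alpha * (Num.truncn (a * ln (n%:R : R))).+1%:R ^+ k / n%:R) <= e.
Proof.
move=> a0 al0 e0 n0 u1 uC.
set u := ln (n%:R : R) in u1 uC *.
set B := (Num.truncn (a * u)).+1.
have nR : 0 < (n%:R : R) by rewrite ltr0n.
have nE : expR u = n%:R by rewrite /u lnK // posrE.
have u0 : 0 < u by apply: lt_le_trans u1.
have au0 : 0 <= a * u by rewrite mulr_ge0 ?ltW.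
have hB : B%:R <= a * u + 1 by rewrite /B -addn1 natrD lerD2r truncn_le.
have hB1 : B.+1%:R <= (a + 2) * u.
  rewrite -addn1 natrD; nra.
have hB2 : B%:R <= (a + 2) * u by nra.
have B0 : 0 <= (B%:R : R) by [].
have step1 : (B.+1 * B)%:R * (alpha * B%:R ^+ k / n%:R) <=
             alpha / n%:R * ((a + 2) * u) ^+ k.+2.
  have -> : (B.+1 * B)%:R * (alpha * B%:R ^+ k / n%:R) =
            alpha / n%:R * (B.+1%:R * (B%:R * B%:R ^+ k)) :> R.
    by rewrite natrM; ring.
  apply: ler_wpM2l; first by rewrite divr_ge0 ?ltW.
  rewrite !exprS; apply: ler_pM => //; apply: ler_pM => //. apply: lerXn2r => //; rewrite nnegrE; nra.
apply: (le_trans step1).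
set F : R := (k.+3)`!%:R.
have F0 : 0 < F by rewrite ltr0n fact_gt0.
have hexp : u ^+ k.+3 <= F * n%:R.
  have := expR_ge1Dxn k.+2 (ltW u0); rewrite nE => H.
  rewrite -ler_pdivrMl //; rewrite mulrC; lra.
set K := alpha * (a + 2) ^+ k.+2.
have a2 : 0 <= a + 2 by lra.
have K0 : 0 <= K by apply: mulr_ge0; [exact: ltW | exact: exprn_ge0].
have KF : K * F <= e * u by rewrite -ler_pdivrMl // mulrC.
have -> : alpha / n%:R * ((a + 2) * u) ^+ k.+2 = K * u ^+ k.+2 / n%:R.
  by rewrite /K exprMn; ring.
rewrite ler_pdivrMr //.
rewrite -(ler_pM2r u0).
have -> : K * u ^+ k.+2 * u = K * u ^+ k.+3 by rewrite [in RHS]exprS; ring.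
apply: (le_trans (ler_wpM2l K0 hexp)).
have -> : e * n%:R * u = (e * u) * n%:R by ring.
rewrite mulrA; apply: ler_wpM2r; first exact: ltW.
exact: KF.
Qed.

Local Open Scope classical_set_scope.

Lemma bad_witness (R : realType) (a : R) n k m (Phi : formula n k m) :
  0 <= a * ln (n%:R : R) -> ~~ good_event a Phi ->
  exists Y : {set 'I_m}, [&& 0 < #|Y|, #|Y| <= (Num.truncn (a * ln (n%:R : R))).+1
                            & #|var_of Phi Y| < #|Y|]%N.
Proof.
move=> L0; rewrite /good_event negb_forall => /existsP [Y0].
rewrite negb_imply => /andP[H1]; rewrite -ltNge => H2.
set c := #|var_of Phi Y0| in H2.
have cT : (c <= Num.truncn (a * ln (n%:R : R)))%N by rewrite truncn_ge_nat // ltW.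
have cY : (c < #|Y0|)%N by rewrite -(ltr_nat R); apply: lt_le_trans H1.
have [Y YY0 cardY] := @exists_subset_card _ Y0 _ cY.
exists Y; rewrite cardY /= ltnS cT /=.
rewrite ltnS /c; apply: fintype.subset_leq_card; exact: var_of_sub.
Qed.

Theorem lemma6p2 (R : realType) (k : nat) (a alpha : R) :
  (3 <= k)%N -> 0 < a -> 0 < alpha ->
  (fun n : nat => prob_good a n k (Num.truncn (alpha * n%:R))) @ \oo --> (1 : R).
Proof.
move=> k3 a0 al0.
apply/cvgrPdist_le => e e0.
set e' := Num.min e 1.
have e'0 : 0 < e' by rewrite lt_min e0 ltr01.
set C := alpha * (a + 2) ^+ k.+2 * (k.+3)`!%:R / e'.
set D := Num.max 1 C.
exists (Num.truncn (expR D)).+1 => //; move=> n /= Hn.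
have nD : expR D < n%:R.
  apply: lt_le_trans (truncnS_gt _) _; by rewrite ler_nat.
have nR : 0 < (n%:R : R) by apply: lt_trans nD; exact: expR_gt0.
have n0 : (0 < n)%N by rewrite -(ltr0n R).
have uD : D < ln (n%:R : R) by rewrite -ltr_expR lnK // posrE.
have u1 : 1 <= ln (n%:R : R) by apply: ltW; apply: le_lt_trans uD; rewrite le_max lexx.
have uC : C <= ln (n%:R : R) by apply: ltW; apply: le_lt_trans uD; rewrite le_max lexx orbT.
have hall := @anal R a alpha e' k n a0 al0 e'0 n0 u1 uC.
set B := (Num.truncn (a * ln (n%:R : R))).+1 in hall.
set m := Num.truncn (alpha * n%:R).
set x := alpha * B%:R ^+ k / n%:R in hall.
have x0 : 0 <= x by rewrite /x divr_ge0 ?mulr_ge0 ?exprn_ge0 ?ltW.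
have x1 : x <= 1.
  apply: (le_trans _ (_ : e' <= 1)); last by rewrite ge_min lexx orbT.
  apply: le_trans hall.
  rewrite ler_peMl // natrM; apply: mulr_ege1; rewrite ler1n //.
have hx : (m * n * B ^ k)%:R / (n ^ k)%:R <= x.
  have mR : (m%:R : R) <= alpha * n%:R by rewrite /m truncn_le mulr_ge0 ?ltW.
  have E : (n%:R : R) ^+ k = n%:R * (n%:R * n%:R ^+ (k - 2)).
    by rewrite -!exprS; congr (_ ^+ _); lia.
  rewrite !natrM !natrX ler_pdivrMr ?exprn_gt0 // E /x.
  have -> : alpha * B%:R ^+ k / n%:R * (n%:R * (n%:R * n%:R ^+ (k - 2))) =
            alpha * n%:R * (B%:R ^+ k * n%:R ^+ (k - 2)) by field; rewrite gt_eqF.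
  have -> : m%:R * n%:R * B%:R ^+ k = m%:R * (B%:R ^+ k * n%:R) :> R by ring.
  apply: ler_pM => //.
  apply: ler_wpM2l; first by rewrite exprn_ge0.
  apply: ler_eXnr; [lia | by rewrite ler1n].
have L0 : 0 <= a * ln (n%:R : R) by apply: mulr_ge0; [exact: ltW | exact: le_trans ler01 u1].
have HP : forall Phi : formula n k m, (fun Phi => ~~ good_event a Phi) Phi ->
    exists Y : {set 'I_m}, [&& 0 < #|Y|, #|Y| <= B & #|var_of Phi Y| < #|Y|]%N.
  move=> Phi; exact: (@bad_witness R a n k m Phi L0).
have Hk := @key R n k m B x (fun Phi => ~~ good_event a Phi) n0 hx x1 HP.
have A0 : (0 < #|{: formula n k m}|)%N by rewrite card_formula !expn_gt0 muln_gt0 n0.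
set G := [set Phi : formula n k m | good_event a Phi]%SET.
have hc : #|[set Phi : formula n k m | ~~ good_event a Phi]%SET| = (#|{: formula n k m}| - #|G|)%N.
  have -> : [set Phi : formula n k m | ~~ good_event a Phi]%SET = ~: G.
    by apply/setP => Phi; rewrite !inE.
  by rewrite (cardsCs (~: G)) finset.setCK.
have E1 : 1 - prob_good a n k m =
          #|[set Phi : formula n k m | ~~ good_event a Phi]%SET|%:R / #|{: formula n k m}|%:R.
  rewrite /prob_good -/G hc natrB ?max_card // mulrBl divff // pnatr_eq0 -lt0n //.
rewrite E1 ger0_norm ?divr_ge0 ?ler0n //.
apply: (le_trans Hk); apply: le_trans hall _; by rewrite ge_min lexx.
Qed.
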